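(* Let $a<b$ be real numbers and let $n\ge 1$. There are infinitely many pairwise nonisomorphic nontrivial topological quandle structures on the closed interval $[a,b]$, and there are infinitely many pairwise nonisomorphic nontrivial topological quandle structures on the open unit ball $B^{\circ}=\{x\in\mathbb{R}^n:\|x\|<1\}$.
   Context: A topological quandle is a topological space $X$ with a continuous map $f:X\times X\to X$ such that for every $y\in X$ the map $R_y:X\to X$, $x\mapsto f(x,y)$, is a homeomorphism, $f(f(x,y),z)=f(f(x,z),f(y,z))$ for all $x,y,z\in X$, and $f(x,x)=x$ for all $x\in X$. The structure is trivial if $f(x,y)=x$ for all $x,y$, and nontrivial otherwise. Two topological quandle structures $f_1,f_2$ on spaces $X_1,X_2$ are isomorphic if there is a homeomorphism $\varphi:X_1\to X_2$ with $\varphi(f_1(x,y))=f_2(\varphi(x),\varphi(y))$ for all $x,y\in X_1$. *)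

(* Defs.v *)
From HB Require Import structures.
From mathcomp Require Import all_boot all_order all_algebra.
From mathcomp Require Import all_classical all_reals all_analysis.
Set Implicit Arguments. Unset Strict Implicit. Unset Printing Implicit Defensive.
Import Order.TTheory GRing.Theory Num.Theory.
Import numFieldNormedType.Exports.
Local Open Scope classical_set_scope.
Local Open Scope ring_scope.

(* A topological quandle structure on the subspace X of a topological space T.
   The operation is given by f : T -> T -> T; only its values on X * X matter. *)
Definition is_top_quandle {T : topologicalType} (X : set T) (f : T -> T -> T) : Prop :=
  [/\ (forall x y, X x -> X y -> X (f x y)),
      {within X `*` X, continuous (fun p : T * T => f p.1 p.2)},
      (forall y, X y ->
         {within X, continuous (fun x => f x y)} /\
         exists g : T -> T,
           [/\ (forall x, X x -> X (g x)),
               (forall x, X x -> g (f x y) = x),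
               (forall x, X x -> f (g x) y = x) &
               {within X, continuous g}]),
      (forall x y z, X x -> X y -> X z -> f (f x y) z = f (f x z) (f y z)) &
      (forall x, X x -> f x x = x)].

Definition nontrivial_quandle {T : Type} (X : set T) (f : T -> T -> T) : Prop :=
  exists x y, X x /\ X y /\ f x y <> x.

Definition quandle_iso {T1 T2 : topologicalType} (X1 : set T1) (f1 : T1 -> T1 -> T1)
    (X2 : set T2) (f2 : T2 -> T2 -> T2) : Prop :=
  exists (phi : T1 -> T2) (psi : T2 -> T1),
    [/\ (forall x, X1 x -> X2 (phi x)),
        (forall y, X2 y -> X1 (psi y)),
        (forall x, X1 x -> psi (phi x) = x),
        (forall y, X2 y -> phi (psi y) = y) &
        {within X1, continuous phi}] /\
    {within X2, continuous psi} /\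
    (forall x y, X1 x -> X1 y -> phi (f1 x y) = f2 (phi x) (phi y)).

Definition infinitely_many_nontrivial_top_quandles {T : topologicalType} (X : set T) : Prop :=
  exists F : nat -> T -> T -> T,
    (forall i, is_top_quandle X (F i) /\ nontrivial_quandle X (F i)) /\
    (forall i j, i <> j -> ~ quandle_iso X (F i) X (F j)).

(* Open Euclidean unit ball in R^n (row vectors, product topology). *)
Definition open_unit_ball (R : realType) (n : nat) : set 'rV[R]_n :=
  [set x | \sum_(i < n) (x ord0 i) ^+ 2 < 1].
Arguments open_unit_ball : clear implicits.

(* Main.v *)
Require Import Defs.
From HB Require Import structures.
From mathcomp Require Import all_boot all_order all_algebra.
From mathcomp Require Import all_classical all_reals all_analysis.
From mathcomp Require Import ring lra.
Import Order.TTheory GRing.Theory Num.Theory.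
Import numFieldNormedType.Exports.
Local Open Scope classical_set_scope.
Local Open Scope ring_scope.

Definition Pinv {T : Type} (X : set T) (F : T -> T -> T) (M : nat) : Prop :=
  exists y z, X y /\ X z /\
   (forall w, X w -> exists x, X x /\ F x w <> F (F x y) y) /\
   (forall x, X x -> F (iter M (fun u => F u y) x) z = x).

Lemma iso_sym (T : topologicalType) (X1 X2 : set T) F1 F2 :
  (forall x y, X1 x -> X1 y -> X1 (F1 x y)) ->
  quandle_iso X1 F1 X2 F2 -> quandle_iso X2 F2 X1 F1.
Proof.
move=> cl [phi [psi [[H1 H2 H3 H4 H5] [H6 H7]]]].
exists psi, phi; split; [split=> // | split=> //].
move=> x y Xx Xy.
have e : phi (F1 (psi x) (psi y)) = F2 x y by rewrite H7 ?H4 //; exact: H2.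
by rewrite -e H3 //; apply: (cl); exact: H2.
Qed.

Lemma Pinv_iso (T : topologicalType) (X : set T) F1 F2 M :
  (forall x y, X x -> X y -> X (F1 x y)) ->
  quandle_iso X F1 X F2 -> Pinv X F1 M -> Pinv X F2 M.
Proof.
move=> cl [phi [psi [[H1 H2 H3 H4 H5] [H6 H7]]]] [y [z [Xy [Xz [P1 P2]]]]].
exists (phi y), (phi z); split; first exact: H1.
split; first exact: H1.
split.
  move=> w' Xw'.
  have [x [Xx Hx]] := P1 _ (H2 _ Xw').
  exists (phi x); split; first exact: H1.
  move=> E; apply: Hx.
  have E1 : phi (F1 x (psi w')) = F2 (phi x) w' by rewrite H7 ?H4 //; exact: H2.
  have E2 : phi (F1 (F1 x y) y) = F2 (F2 (phi x) (phi y)) (phi y)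
    by rewrite H7 ?H7 //; exact: (cl).
  rewrite -(H3 (F1 x (psi w'))); last by apply: (cl) => //; exact: H2.
  rewrite -(H3 (F1 (F1 x y) y)); last by apply: (cl) => //; exact: (cl).
  by rewrite E1 E2 E.
move=> x' Xx'.
have Xx := H2 _ Xx'.
have it : forall k, X (iter k (fun u => F1 u y) (psi x')) /\
   phi (iter k (fun u => F1 u y) (psi x')) = iter k (fun u => F2 u (phi y)) x'.
  elim=> [|k [IHX IHe]] /=; first by rewrite H4.
  by split; [exact: (cl) | rewrite H7 // IHe].
have [itX ite] := it M.
rewrite -ite -H7 // P2 // H4 //.
Qed.


Section Reals.
Variable R : realType.
Implicit Types (tau sig m A w : R).

Definition den tau m : R := 1 + (expR tau - 1) * m.
Definition Cf tau m : R := Num.sqrt (expR tau / den tau m).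
Definition TA A w : R :=
  Num.max (- A) (Num.min (2 * Num.max w 0) (1 - 4 * (A + 1) * (Num.max w 0 - 2^-1))).

Lemma den_gt0 tau m : 0 <= m <= 1 -> 0 < den tau m.
Proof.
move=> /andP[m0 m1]; rewrite /den.
have e0 := expR_gt0 tau.
have : 0 <= expR tau * m by rewrite mulr_ge0 // ltW.
case: (ltrP m 1) => h; first nra.
have -> : m = 1 by apply/eqP; rewrite eq_le m1.
nra.
Qed.

Lemma Cf_sq tau m : 0 <= m <= 1 -> Cf tau m ^+ 2 = expR tau / den tau m.
Proof.
move=> hm; rewrite sqr_sqrtr //; apply: divr_ge0; apply: ltW; [exact: expR_gt0| exact: den_gt0].
Qed.

Lemma Cf_gt0 tau m : 0 <= m <= 1 -> 0 < Cf tau m.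
Proof.
move=> hm; rewrite sqrtr_gt0; apply: divr_gt0; [exact: expR_gt0| exact: den_gt0].
Qed.

Lemma Cf_1 tau : Cf tau 1 = 1.
Proof.
rewrite /Cf /den mulr1 addrCA subrr addr0 divff ?sqrtr1 //.
by rewrite gt_eqF // expR_gt0.
Qed.

Lemma Cf_0 m : Cf 0 m = 1.
Proof. by rewrite /Cf /den expR0 subrr mul0r addr0 divr1 sqrtr1. Qed.

Lemma ell_le1 tau m : 0 <= m <= 1 ->
  0 <= expR tau * m / den tau m <= 1.
Proof.
move=> hm; have d0 := den_gt0 tau m hm; have e0 := expR_gt0 tau.
move: (hm) => /andP[m0 m1].
rewrite divr_ge0 ?mulr_ge0 ?(ltW e0) ?(ltW d0) //= ler_pdivrMr // mul1r /den.
nra.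
Qed.

Lemma ell_lt1 tau m : 0 <= m < 1 -> expR tau * m / den tau m < 1.
Proof.
move=> /andP[m0 m1]; have hm : 0 <= m <= 1 by rewrite m0 ltW.
have d0 := den_gt0 tau m hm; have e0 := expR_gt0 tau.
rewrite ltr_pdivrMr // mul1r /den; nra.
Qed.

Lemma Cf_group tau sig m : 0 <= m <= 1 ->
  Cf sig (expR tau * m / den tau m) * Cf tau m = Cf (tau + sig) m.
Proof.
move=> hm; have d0 := den_gt0 tau m hm; have e0 := expR_gt0 tau.
have hm' := ell_le1 tau m hm.
have d1 := den_gt0 sig _ hm'; have e1 := expR_gt0 sig.
rewrite /Cf -sqrtrM ?divr_ge0 ?(ltW e1) ?(ltW d1) //; congr Num.sqrt.
move: d1; rewrite /den expRD => d1.
have d0' : den tau m != 0 by rewrite gt_eqF.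
move: d0'; rewrite /den => d0'.
field.
rewrite d0' andbT; have := den_gt0 (tau + sig) m hm; rewrite /den expRD => h.
by rewrite gt_eqF.
Qed.

Lemma TA_neg A w : 0 <= A -> w <= 0 -> TA A w = 0.
Proof.
move=> A0 w0; rewrite /TA.
have -> : Num.max w 0 = 0 by rewrite max_r.
rewrite mulr0 min_l ?max_r //; [rewrite oppr_le0 // | lra].
Qed.

Lemma TA_range A w : 0 <= A -> - A <= TA A w <= 1.
Proof.
move=> A0; rewrite /TA le_max lexx /= ge_max.
have -> : - A <= 1 by lra.
rewrite /= ge_min.
set W := Num.max w 0.
have W0 : 0 <= W by rewrite le_max lexx orbT.
case: (lerP W (2^-1)) => h.
  by apply/orP; left; lra.
apply/orP; right.
have : 0 <= (A + 1) * (W - 2^-1) by apply: mulr_ge0; lra.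
lra.
Qed.

Lemma TA_surj A s : 1 <= A -> - A <= s <= 1 ->
  exists w, 0 <= w <= 1 /\ TA A w = s.
Proof.
move=> A1 /andP[s1 s2]; rewrite /TA.
case: (lerP 0 s) => s0.
  exists (s / 2); split; first by apply/andP; split; lra.
  have -> : Num.max (s / 2) 0 = s / 2 by rewrite max_l //; lra.
  have h : 0 <= (A + 1) * (2^-1 - s / 2) by apply: mulr_ge0; lra.
  rewrite min_l; last by lra.
  rewrite max_r; lra.
have A0 : 0 < A + 1 by lra.
set w := 2^-1 + (1 - s) / (4 * (A + 1)).
have hq : 0 <= (1 - s) / (4 * (A + 1)) by apply: divr_ge0; lra.
have hq2 : (1 - s) / (4 * (A + 1)) <= 4^-1.
  rewrite ler_pdivrMr; last by lra.
  lra.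
have e : 4 * (A + 1) * ((1 - s) / (4 * (A + 1))) = 1 - s.
  by field; lra.
exists w; split; first by apply/andP; split; rewrite /w; lra.
have -> : Num.max w 0 = w by rewrite max_l // /w; lra.
rewrite /w.
have -> : 2^-1 + (1 - s) / (4 * (A + 1)) - 2^-1 = (1 - s) / (4 * (A + 1)) by ring.
rewrite e.
rewrite min_r; last by lra.
rewrite max_r; lra.
Qed.
End Reals.
Arguments den {R}. Arguments Cf {R}. Arguments TA {R}.
Arguments den_gt0 {R}. Arguments Cf_sq {R}. Arguments Cf_gt0 {R}. Arguments Cf_1 {R}.
Arguments Cf_0 {R}. Arguments ell_le1 {R}. Arguments ell_lt1 {R}. Arguments Cf_group {R}.
Arguments TA_neg {R}. Arguments TA_range {R}. Arguments TA_surj {R}.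


Section Cont.
Variable R : realType.

Lemma id_cont {U : topologicalType} : continuous (@id U).
Proof. by move=> x. Qed.

Lemma fst_cont {U V : topologicalType} : continuous (@fst U V).
Proof. by move=> [x y]; exact: cvg_fst. Qed.

Lemma snd_cont {U V : topologicalType} : continuous (@snd U V).
Proof. by move=> [x y]; exact: cvg_snd. Qed.

Lemma maxr_cont {U : topologicalType} (f g : U -> R) :
  continuous f -> continuous g -> continuous (fun u => Num.max (f u) (g u)).
Proof. move=> cf cg; exact: (max_fun_continuous cf cg). Qed.

Lemma minr_cont {U : topologicalType} (f g : U -> R) :
  continuous f -> continuous g -> continuous (fun u => Num.min (f u) (g u)).
Proof. move=> cf cg; exact: (min_fun_continuous cf cg). Qed.

Lemma addr_cont {U : topologicalType} (f g : U -> R) :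
  continuous f -> continuous g -> continuous (fun u => f u + g u).
Proof. move=> cf cg x; exact: (continuousD (cf x) (cg x)). Qed.

Lemma mulr_cont {U : topologicalType} (f g : U -> R) :
  continuous f -> continuous g -> continuous (fun u => f u * g u).
Proof. move=> cf cg x; exact: (continuousM (cf x) (cg x)). Qed.

Lemma oppr_cont {U : topologicalType} (f : U -> R) :
  continuous f -> continuous (fun u => - f u).
Proof. move=> cf x; exact: (continuousN (cf x)). Qed.

Lemma comp_cont {U V W : topologicalType} {f : U -> V} {g : V -> W} :
  continuous f -> continuous g -> continuous (fun u => g (f u)).
Proof. move=> cf cg x; exact: (continuous_comp (cf x) (cg (f x))). Qed.

Lemma TA_cont (A : R) : continuous (TA A).
Proof.
rewrite /TA.
have cm : continuous (fun w : R => Num.max w 0).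
  apply: maxr_cont; [exact: id_cont | exact: cst_continuous].
apply: maxr_cont; first exact: cst_continuous.
apply: minr_cont.
  apply: mulr_cont => //; exact: cst_continuous.
apply: addr_cont; first exact: cst_continuous.
apply: oppr_cont; apply: mulr_cont; first exact: cst_continuous.
apply: addr_cont => //; exact: cst_continuous.
Qed.

Lemma Cf_cont {U : topologicalType} (g h : U -> R) :
  continuous g -> continuous h -> (forall u, 0 <= h u <= 1) ->
  continuous (fun u => Cf (g u) (h u)).
Proof.
move=> cg ch h01 x; rewrite /Cf.
have ce : continuous (fun u => expR (g u)) := comp_cont cg (@continuous_expR R).
have cd : continuous (fun u => den (g u) (h u)).
  rewrite /den; apply: addr_cont; first exact: cst_continuous.
  apply: mulr_cont => //; apply: addr_cont => //; exact: cst_continuous.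
apply: (@continuous_comp _ _ _ (fun u => expR (g u) / den (g u) (h u)) Num.sqrt).
  apply: continuousM; first exact: ce.
  apply: continuousV; first by rewrite gt_eqF // den_gt0.
  exact: cd.
exact: sqrt_continuous.
Qed.
End Cont.


Section Frame.
Variables (R : realType) (T : topologicalType) (X : set T) (sc : R -> T -> T) (q : T -> R).
Hypothesis sc1 : forall x, sc 1 x = x.
Hypothesis scM : forall k l x, sc k (sc l x) = sc (k * l) x.
Hypothesis q_ge0 : forall x, 0 <= q x.
Hypothesis qsc : forall k x, q (sc k x) = k ^+ 2 * q x.
Hypothesis Xq : forall x, q x <= 1 -> X x.
Hypothesis qsurj : forall s, 0 <= s <= 2 -> exists x, X x /\ q x = s.
Hypothesis sc_cont : continuous (fun p : R * T => sc p.1 p.2).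
Hypothesis q_cont : continuous q.

Definition mq x := Num.min (q x) 1.
Definition psi tau x := sc (Cf tau (mq x)) x.
Definition tt A y := TA A (q y - 1).
Definition FF A x y := psi (tt A y) x.

Lemma mq01 x : 0 <= mq x <= 1.
Proof.
rewrite /mq le_min q_ge0 ler01 /= ge_min lexx orbT //.
Qed.

Lemma psi_big tau x : 1 <= q x -> psi tau x = x.
Proof. by move=> h; rewrite /psi /mq min_r // Cf_1 sc1. Qed.

Lemma q_psi tau x : q (psi tau x) = expR tau / den tau (mq x) * q x.
Proof. by rewrite /psi qsc Cf_sq // mq01. Qed.

Lemma q_psi_small tau x : q x < 1 -> q (psi tau x) < 1.
Proof.
move=> h; rewrite q_psi.
have -> : mq x = q x by rewrite /mq min_l // ltW.
rewrite mulrAC; apply: ell_lt1; by rewrite q_ge0.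
Qed.

Lemma mq_psi tau x : mq (psi tau x) = expR tau * mq x / den tau (mq x).
Proof.
case: (lerP 1 (q x)) => h.
  rewrite psi_big //.
  have -> : mq x = 1 by rewrite /mq min_r.
  rewrite /den !mulr1 addrCA subrr addr0 divff //.
  by rewrite gt_eqF // expR_gt0.
have e : mq x = q x by rewrite /mq min_l // ltW.
rewrite {1}/mq min_l; last exact/ltW/q_psi_small.
by rewrite q_psi e mulrAC.
Qed.

Lemma psi_group tau sig x : psi sig (psi tau x) = psi (tau + sig) x.
Proof. by rewrite {1}/psi mq_psi /psi scM Cf_group // mq01. Qed.

Lemma psi0 x : psi 0 x = x.
Proof. by rewrite /psi Cf_0 sc1. Qed.

Lemma psi_X tau x : X x -> X (psi tau x).
Proof.
move=> Xx; case: (lerP 1 (q x)) => h; first by rewrite psi_big.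
by apply: Xq; apply/ltW/q_psi_small.
Qed.

Lemma tt_small A x : 0 <= A -> q x <= 1 -> tt A x = 0.
Proof. by move=> A0 h; rewrite /tt TA_neg // subr_le0. Qed.

Lemma tt_psi A tau x : 0 <= A -> tt A (psi tau x) = tt A x.
Proof.
move=> A0; case: (lerP 1 (q x)) => h; first by rewrite psi_big.
by rewrite !tt_small // ltW // q_psi_small.
Qed.

Lemma psi_tt A x : 0 <= A -> psi (tt A x) x = x.
Proof.
move=> A0; case: (lerP 1 (q x)) => h; first by rewrite psi_big.
by rewrite tt_small ?psi0 // ltW.
Qed.

Lemma psi_id_inv tau : (forall x, X x -> psi tau x = x) -> tau = 0.
Proof.
move=> H.
have [y [Xy qy]] : exists y, X y /\ q y = 2^-1 by apply: qsurj; apply/andP; split; lra.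
have := H y Xy => /(congr1 q); rewrite q_psi qy.
have e : mq y = 2^-1 by rewrite /mq qy min_l //; lra.
rewrite e => E.
have hm : 0 <= (2^-1 : R) <= 1 by apply/andP; split; lra.
have d0 := den_gt0 tau _ hm.
have E1 : expR tau / den tau 2^-1 = 1.
  have : (expR tau / den tau 2^-1 - 1) * 2^-1 = 0 by rewrite mulrBl mul1r E subrr.
  by move/eqP; rewrite mulf_eq0 invr_eq0 pnatr_eq0 orbF subr_eq0 => /eqP.
have E2 : expR tau = den tau 2^-1.
  by move: E1 => /(congr1 (fun v => v * den tau 2^-1)); rewrite mul1r divfK // gt_eqF.
move: E2; rewrite /den => E2.
have E3 : expR tau = 1 by lra.
case: (ltrgtP tau 0) => // h.
  by move: (expR_lt1 tau); rewrite h E3 ltxx.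
by move: (expR_gt1 tau); rewrite h E3 ltxx.
Qed.

Lemma tt_range A x : 0 <= A -> - A <= tt A x <= 1.
Proof. by move=> A0; rewrite /tt TA_range. Qed.

Lemma tt_surj A s : 1 <= A -> - A <= s <= 1 -> exists y, X y /\ tt A y = s.
Proof.
move=> A1 hs; have [w [hw e]] := TA_surj A s A1 hs.
have [y [Xy qy]] : exists y, X y /\ q y = 1 + w by apply: qsurj; apply/andP; split; lra.
have e2 : 1 + w - 1 = w by ring.
by exists y; split => //; rewrite /tt qy e2.
Qed.

Lemma pair_cont {U V W : topologicalType} (f : U -> V) (g : U -> W) :
  continuous f -> continuous g -> continuous (fun u => (f u, g u)).
Proof. move=> cf cg x; exact: (cvg_pair (cf x) (cg x)). Qed.

Lemma mq_cont : continuous mq.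
Proof. apply: minr_cont => //; exact: cst_continuous. Qed.

Lemma psi_cont tau : continuous (psi tau).
Proof.
rewrite /psi.
apply: (comp_cont (f := fun x => (Cf tau (mq x), x)) (g := fun p : R * T => sc p.1 p.2)) => //.
apply: pair_cont; last exact: id_cont.
apply: (@Cf_cont R _ (fun=> tau) mq); [exact: cst_continuous | exact: mq_cont | exact: mq01].
Qed.

Lemma tt_cont A : continuous (tt A).
Proof.
rewrite /tt; apply: (comp_cont (f := fun x => q x - 1) (g := TA A)); last exact: TA_cont.
apply: addr_cont => //; exact: cst_continuous.
Qed.

Lemma FF_cont A : continuous (fun p : T * T => FF A p.1 p.2).
Proof.
rewrite /FF /psi.
apply: (comp_cont (f := fun p : T * T => (Cf (tt A p.2) (mq p.1), p.1))
                  (g := fun p : R * T => sc p.1 p.2)) => //.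
apply: pair_cont; last exact: fst_cont.
apply: (@Cf_cont R _ (fun p : T * T => tt A p.2) (fun p : T * T => mq p.1)).
- exact: (comp_cont snd_cont (tt_cont A)).
- exact: (comp_cont fst_cont mq_cont).
- move=> p; exact: mq01.
Qed.

Lemma FF_quandle A : 0 <= A -> is_top_quandle X (FF A).
Proof.
move=> A0; split.
- by move=> x y Xx Xy; exact: psi_X.
- exact: continuous_subspaceT (FF_cont A).
- move=> y Xy; split; first exact: continuous_subspaceT (psi_cont _).
  exists (psi (- tt A y)); split.
  + by move=> x Xx; exact: psi_X.
  + by move=> x Xx; rewrite /FF psi_group subrr psi0.
  + by move=> x Xx; rewrite /FF psi_group addNr psi0.
  + exact: continuous_subspaceT (psi_cont _).
- move=> x y z Xx Xy Xz; rewrite /FF tt_psi // !psi_group; congr psi.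
  by rewrite addrC.
- by move=> x Xx; rewrite /FF psi_tt.
Qed.

Lemma FF_nontriv A : 1 <= A -> nontrivial_quandle X (FF A).
Proof.
move=> A1.
have [y [Xy ty]] : exists y, X y /\ tt A y = 1 by apply: tt_surj => //; apply/andP; split; lra.
have N : ~ (forall x, X x -> psi 1 x = x) by move/psi_id_inv => /eqP; rewrite oner_eq0.
have [x [Xx Hx]] : exists x, X x /\ psi 1 x <> x.
  apply: contrapT => N2; apply: N => x Xx; apply: contrapT => Hx; apply: N2; by exists x.
by exists x, y; rewrite /FF ty.
Qed.

Lemma FF_iter A y k x : iter k (fun u => FF A u y) x = psi (k%:R * tt A y) x.
Proof.
elim: k => [|k IH] /=; first by rewrite mul0r psi0.
by rewrite IH /FF psi_group -[k.+1]addn1 natrD mulrDl mul1r.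
Qed.

Lemma P_holds (i j : nat) : (i < j)%N -> Pinv X (FF (2 ^ j)%:R) (2 ^ i.+1).
Proof.
move=> ij; set A : R := (2 ^ j)%:R; set M := (2 ^ i.+1)%N.
have MA : (M%:R : R) <= A by rewrite ler_nat leq_pexp2l.
have A1 : 1 <= A by rewrite /A (ler_nat R 1) expn_gt0.
have A0 : 0 <= A by lra.
have M0 : 0 <= (M%:R : R) by [].
have [y [Xy ty]] : exists y, X y /\ tt A y = 1 by apply: tt_surj => //; apply/andP; split; lra.
have [z [Xz tz]] : exists z, X z /\ tt A z = - M%:R by apply: tt_surj => //; apply/andP; split; lra.
exists y, z; split => //; split => //; split.
  move=> w Xw.
  have N : ~ (forall x, X x -> FF A x w = FF A (FF A x y) y).
    move=> H; suff : tt A w + - 2 = 0.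
      by have := tt_range A w A0; lra.
    apply: psi_id_inv => x Xx.
    rewrite -psi_group.
    have := H x Xx; rewrite /FF ty psi_group => ->.
    by rewrite psi_group addrN psi0.
  apply: contrapT => N2; apply: N => x Xx; apply: contrapT => Hx; apply: N2; by exists x.
move=> x Xx; rewrite FF_iter /FF psi_group ty tz mulr1 addrN psi0 //.
Qed.

Lemma P_fails (i : nat) : ~ Pinv X (FF (2 ^ i)%:R) (2 ^ i.+1).
Proof.
set A : R := (2 ^ i)%:R; set M := (2 ^ i.+1)%N.
have A1 : 1 <= A by rewrite /A (ler_nat R 1) expn_gt0.
have A0 : 0 <= A by lra.
have MA : (M%:R : R) = 2 * A by rewrite /M /A expnS natrM.
move=> [y [z [Xy [Xz [c1 c2]]]]].
set tau := tt A y; set sig := tt A z.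
have e : M%:R * tau + sig = 0.
  apply: psi_id_inv => x Xx; rewrite -psi_group.
  by have := c2 x Xx; rewrite FF_iter /FF.
have rt := tt_range A y A0; have rs := tt_range A z A0.
rewrite -/tau in rt; rewrite -/sig in rs.
have out : ~ (- A <= 2 * tau <= 1).
  move=> h; have [w [Xw tw]] := tt_surj A (2 * tau) A1 h.
  have [x [Xx Hx]] := c1 w Xw; apply: Hx.
  by rewrite /FF tw psi_group -/tau; congr psi; ring.
rewrite MA in e.
case: (lerP (2 * tau) 1) => h1.
  have h2 : 2 * tau < - A.
    by case: (lerP (- A) (2 * tau)) => // h3; exfalso; apply: out; apply/andP; split.
  nra.
nra.
Qed.

Lemma FF_family : infinitely_many_nontrivial_top_quandles X.
Proof.
exists (fun i => FF (2 ^ i)%:R); split.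
  move=> i; split; first by apply: FF_quandle; rewrite ler0n.
  by apply: FF_nontriv; rewrite (ler_nat R 1) expn_gt0.
have cl : forall i x y, X x -> X y -> X (FF (2 ^ i)%:R x y).
  by move=> i x y Xx Xy; apply: psi_X.
move=> i j ij iso.
case: (ltngtP i j) => h; last by apply: ij.
- apply: (P_fails i); apply: (@Pinv_iso T X _ _ _ (cl j) _ (P_holds _ _ h)).
  exact: (@iso_sym T X X _ _ (cl i) iso).
- apply: (P_fails j); exact: (@Pinv_iso T X _ _ _ (cl i) iso (P_holds _ _ h)).
Qed.
End Frame.


Lemma interval_family (R : realType) (a b : R) : a < b ->
  infinitely_many_nontrivial_top_quandles `[a, b].
Proof.
move=> ab.
set mid := (a + b) / 2; set L := b - a.
have L0 : 0 < L by rewrite /L subr_gt0.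
have L0' : L != 0 by rewrite gt_eqF.
apply: (@FF_family R R `[a, b] (fun k x => mid + k * (x - mid))
          (fun x => (4 * (x - mid) / L) ^+ 2)).
- by move=> x; rewrite mul1r addrC subrK.
- by move=> k l x; ring.
- by move=> x; exact: sqr_ge0.
- by move=> k x; ring.
- move=> x h; set d := 4 * (x - mid) / L in h.
  have hd : -1 <= d <= 1.
    by apply/andP; split; nra.
  have ex : x - mid = d * L / 4 by rewrite /d; field.
  have hdL : - L <= d * L <= L by apply/andP; split; nra.
  rewrite /= in_itv /=; apply/andP; split; rewrite /mid /L in ex hdL; lra.
- move=> s /andP[s0 s2].
  have q0 := sqrtr_ge0 s; have qq := sqr_sqrtr s0.
  have q2 : Num.sqrt s <= 2 by nra.
  exists (mid + Num.sqrt s * L / 4); split.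
    have hdL : 0 <= Num.sqrt s * L <= 2 * L by apply/andP; split; nra.
    rewrite /= in_itv /=; apply/andP; split; rewrite /mid /L in hdL *; lra.
  have -> : 4 * (mid + Num.sqrt s * L / 4 - mid) / L = Num.sqrt s by field.
  exact: qq.
- apply: addr_cont; first exact: cst_continuous.
  apply: mulr_cont; first exact: fst_cont.
  apply: addr_cont; [exact: snd_cont | exact: cst_continuous].
- have c : continuous (fun x : R => 4 * (x - mid) / L).
    apply: mulr_cont; last exact: cst_continuous.
    apply: mulr_cont; first exact: cst_continuous.
    apply: addr_cont; [exact: id_cont | exact: cst_continuous].
  have -> : (fun x0 : R => (4 * (x0 - mid) / L) ^+ 2) =
            (fun x0 => (4 * (x0 - mid) / L) * (4 * (x0 - mid) / L)).
    by apply: funext => x; rewrite expr2.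
  exact: mulr_cont.
Qed.

Lemma ball_family (R : realType) (n : nat) : (1 <= n)%N ->
  infinitely_many_nontrivial_top_quandles (open_unit_ball R n).
Proof.
move=> hn.
apply: (@FF_family R 'rV[R]_n (open_unit_ball R n) (fun k x => k *: x)
          (fun x => 4 * \sum_(i < n) (x ord0 i) ^+ 2)).
- by move=> x; rewrite scale1r.
- by move=> k l x; rewrite scalerA.
- move=> x; apply: mulr_ge0 => //; apply: sumr_ge0 => i _; exact: sqr_ge0.
- move=> k x.
  have -> : \sum_(i < n) (k *: x) ord0 i ^+ 2 = k ^+ 2 * \sum_(i < n) x ord0 i ^+ 2.
    rewrite mulr_sumr; apply: eq_bigr => i _; by rewrite mxE exprMn.
  ring.
- move=> x h; rewrite /open_unit_ball /=.
  have : 0 <= \sum_(i < n) x ord0 i ^+ 2 by apply: sumr_ge0 => i _; exact: sqr_ge0.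
  lra.
- move=> s /andP[s0 s2].
  have qq := sqr_sqrtr s0.
  pose i0 : 'I_n := Ordinal hn.
  pose x : 'rV[R]_n := \row_(j < n) (if j == i0 then Num.sqrt s / 2 else 0).
  have sx : \sum_(i < n) x ord0 i ^+ 2 = s / 4.
    rewrite (bigD1 i0) //= big1; last by move=> j ji0; rewrite mxE (negbTE ji0) expr0n.
    rewrite mxE eqxx addr0 exprMn qq; by field.
  exists x; split; last by rewrite sx; field.
  rewrite /open_unit_ball /= sx; lra.
- exact: scale_continuous.
- have c : forall r : seq 'I_n,
      continuous (fun x0 : 'rV[R]_n => \sum_(i <- r) x0 ord0 i ^+ 2).
    elim=> [|j r IH].
      have -> : (fun x0 : 'rV[R]_n => \sum_(i <- [::]) x0 ord0 i ^+ 2) = fun=> 0.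
        by apply: funext => x0; rewrite big_nil.
      exact: cst_continuous.
    have -> : (fun x0 : 'rV[R]_n => \sum_(i <- j :: r) x0 ord0 i ^+ 2) =
              (fun x0 => x0 ord0 j * x0 ord0 j + \sum_(i <- r) x0 ord0 i ^+ 2).
      by apply: funext => x0; rewrite big_cons expr2.
    apply: addr_cont => //.
    apply: mulr_cont; exact: coord_continuous.
  apply: mulr_cont; first exact: cst_continuous.
  exact: c.
Qed.


Theorem mainTheorem2 (R : realType) (a b : R) (n : nat) :
  a < b -> (1 <= n)%N ->
  infinitely_many_nontrivial_top_quandles `[a, b] /\
  infinitely_many_nontrivial_top_quandles (open_unit_ball R n).
Proof.
move=> ab hn; split; [exact: interval_family | exact: ball_family].
Qed.
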